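(* Let $S_1\subseteq S_2\subseteq\mathbb{Z}^k$ and $T\subseteq\mathbb{Z}^k$ be finite sets such that $S_1$ and $S_2$ have the same linear span over $\mathbb{Q}$. If $(S_1,T)$ is cancellable, then $(S_2,T)$ is cancellable.
   Context: For finite sets $S,T\subseteq\mathbb{Z}^k$, the pair $(S,T)$ is called cancellable if there exist integers $x_u\ge 1$ for $u\in S$ and $y_v\ge 0$ for $v\in T$ such that $\sum_{u\in S}x_u u+\sum_{v\in T}y_v v=0$. *)

(* Defs.v *)
From HB Require Import structures.
From mathcomp Require Import all_boot all_order all_algebra.
Set Implicit Arguments. Unset Strict Implicit. Unset Printing Implicit Defensive.
Import Order.TTheory GRing.Theory Num.Theory.
Local Open Scope ring_scope.

(* Vectors of Z^k are row vectors 'rV[int]_k; finite subsets of Z^k are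
   duplicate-free sequences (uniq s). *)

Definition cancellable (k : nat) (S T : seq 'rV[int]_k) : Prop :=
  exists (x y : 'rV[int]_k -> int),
    (forall u, u \in S -> 1 <= x u) /\
    (forall v, v \in T -> 0 <= y v) /\
    \sum_(u <- S) x u *: u + \sum_(v <- T) y v *: v = 0.

Definition ratmx (k : nat) (S : seq 'rV[int]_k) : 'M[rat]_(size S, k) :=
  \matrix_(i < size S) map_mx (fun z : int => z%:~R) (nth 0 S i).

Definition same_Qspan (k : nat) (S1 S2 : seq 'rV[int]_k) : bool :=
  (ratmx S1 == ratmx S2)%MS.

(* Main.v *)
Require Import Defs.
From HB Require Import structures.
From mathcomp Require Import all_boot all_order all_algebra.
From mathcomp Require Import zify.
Import Order.TTheory GRing.Theory Num.Theory.
Local Open Scope ring_scope.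

Lemma common_den (s : seq rat) :
  exists d : int, 0 < d /\ forall q, q \in s -> exists n : int, d%:~R * q = n%:~R.
Proof.
elim: s => [|q s [d [d0 hd]]]; first by exists 1.
exists (d * denq q); split; first by rewrite mulr_gt0 // denq_gt0.
move=> r; rewrite inE => /orP [/eqP->|/hd [n hn]].
  exists (d * numq q).
  have hq : (denq q)%:~R * q = (numq q)%:~R :> rat.
    by rewrite -[X in _ * X](divq_num_den q) mulrCA divff ?mulr1 // intr_eq0 denq_neq0.
  by rewrite !intrM -mulrA hq.
exists (denq q * n).
by rewrite intrM (mulrC d%:~R) -mulrA hn -intrM.
Qed.

Definition fQ {k : nat} (u : 'rV[int]_k) : 'rV[rat]_k :=
  map_mx (fun z : int => z%:~R) u.

Lemma fQ_inj {k} : injective (@fQ k).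
Proof.
move=> u v /matrixP h; apply/matrixP => i j.
by have := h i j; rewrite !mxE => /intr_inj.
Qed.

Lemma fQZ k (c : int) (u : 'rV[int]_k) : fQ (c *: u) = c%:~R *: fQ u.
Proof. by apply/matrixP => i j; rewrite !mxE intrM. Qed.

Lemma fQ_sum k (I : Type) (r : seq I) (P : pred I) (F : I -> 'rV[int]_k) :
  fQ (\sum_(i <- r | P i) F i) = \sum_(i <- r | P i) fQ (F i).
Proof.
apply/matrixP => i j; rewrite !mxE !summxE.
rewrite (big_morph (fun z : int => z%:~R : rat) (@intrD _) (mulr0z 1)).
by apply: eq_bigr => l _; rewrite mxE.
Qed.

Theorem mainTheorem7 (k : nat) (S1 S2 T : seq 'rV[int]_k) :
  uniq S1 -> uniq S2 -> uniq T ->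
  {subset S1 <= S2} ->
  same_Qspan S1 S2 ->
  cancellable S1 T -> cancellable S2 T.
Proof.
move=> U1 U2 UT sub12 span [x [y [hx [hy hsum]]]].
set z := \sum_(w <- S2 | w \notin S1) w.
have rowS (S : seq 'rV[int]_k) (i : 'I_(size S)) : row i (ratmx S) = fQ (nth 0 S i).
  by rewrite /ratmx rowK.
have zsub : (fQ z <= ratmx S1)%MS.
  case/andP: span => _ h21; apply: submx_trans h21.
  rewrite fQ_sum big_seq_cond; apply: summx_sub => w /andP [wS2 _].
  have hi : (index w S2 < size S2)%N by rewrite index_mem.
  by apply: (eq_row_sub (Ordinal hi)); rewrite rowS /= nth_index.
case/submxP: zsub => a ha.
rewrite mulmx_sum_row in ha.
set as_ := [seq a 0 i | i <- enum 'I_(size S1)].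
have nthas (i : 'I_(size S1)) : nth 0 as_ i = a 0 i.
  by rewrite (nth_map i) ?size_enum_ord // nth_ord_enum.
have [d [d0 hd]] := common_den as_.
set q := fun u => nth 0 as_ (index u S1).
set c := fun u => numq (d%:~R * q u).
have hc : forall u, u \in S1 -> d%:~R * q u = (c u)%:~R.
  move=> u uS1; have /hd [n hn] : q u \in as_.
    by apply: mem_nth; rewrite size_map size_enum_ord index_mem.
  by rewrite /c hn numq_int.
have hz : fQ z = \sum_(u <- S1) q u *: fQ u.
  rewrite ha (big_nth 0) big_mkord; apply: eq_bigr => i _.
  by rewrite rowS /q index_uniq // nthas.
have dz : d *: z = \sum_(u <- S1) c u *: u.
  apply: fQ_inj; rewrite fQZ hz fQ_sum scaler_sumr big_seq [RHS]big_seq.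
  by apply: eq_bigr => u uS1; rewrite fQZ scalerA hc.
set N := 1 + \sum_(u <- S1) `|c u|.
exists (fun u => if u \in S1 then N * x u - c u else d), (fun v => N * y v).
split.
  move=> u _; case: ifP => uS1; last by [].
  have h1 : `|c u| <= \sum_(u <- S1) `|c u|.
    by rewrite (bigD1_seq u) //= lerDl sumr_ge0.
  have h2 := hx u uS1.
  have h3 : c u <= `|c u| by apply: ler_norm.
  have h4 : N <= N * x u by rewrite ler_peMr // /N ltW // ltr_pwDl // sumr_ge0.
  rewrite /N in h4 *; lia.
split.
  move=> v vT; rewrite mulr_ge0 // ?hy //.
  by rewrite /N addr_ge0 // sumr_ge0.
rewrite (bigID (mem S1)) /=.
rewrite -big_filter.
have pe : perm_eq [seq u <- S2 | u \in S1] S1.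
  apply: uniq_perm; rewrite ?filter_uniq // => u.
  by rewrite mem_filter; case uS1: (u \in S1) => //=; rewrite sub12.
rewrite (perm_big _ pe) /=.
rewrite (eq_big_seq (fun u => (N * x u - c u) *: u)); last by move=> u ->.
rewrite [X in _ + X + _](eq_bigr (fun u => d *: u)); last by move=> u /negbTE ->.
rewrite -scaler_sumr -/z dz.
under eq_bigr do rewrite scalerBl -scalerA.
under [X in _ + _ + X]eq_bigr do rewrite -scalerA.
rewrite sumrB -!scaler_sumr.
by rewrite subrK -scalerDr hsum scaler0.
Qed.
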